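(* Let $c>0$ and let $K=K(L)$ be positive integers with $K/L\to c$ as $L\to\infty$. With $$s^*(K,L)=\frac{L\,(K-1)^{L}}{K^{L+1}-(K-1)^{L-1}\big((K-1)K+L\big)},$$ $$\Pi_P=(1-s^* )\Big(1-\big(1-\tfrac{1}{K}\big)^L\Big),\qquad \Pi_R=s^*\,\frac{K}{L}\Big(1-\big(1-\tfrac{1}{K}\big)^L\Big),$$ one has, as $L\to\infty$, $$s^*\to\frac{1}{c\,(e^{1/c}-1)},\qquad \Pi_P\to 1-\frac{c+1}{c\,e^{1/c}},\qquad \Pi_R\to e^{-1/c}.$$
   Context: Here $s^*(K,L)$ is the common offer of the $K$ proposers in the subgame-perfect Nash equilibrium of the Multi-Proposer-Multi-Responder Ultimatum Game with $K$ proposers and $L$ responders (responders playing the evolutionarily stable strategy, which selects each proposer with probability $1/K$), and $\Pi_P,\Pi_R$ are the resulting expected payoffs of a proposer and of a responder. *)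

(* Defs.v *)
From Stdlib Require Import Reals.
From Coquelicot Require Import Coquelicot.
Open Scope R_scope.

Definition sstar (K L : nat) : R :=
  INR L * (INR K - 1) ^ L /
  (INR K ^ (L + 1) - (INR K - 1) ^ (L - 1) * ((INR K - 1) * INR K + INR L)).

(* probability that a given proposer is selected by at least one responder *)
Definition sel (K L : nat) : R := 1 - (1 - 1 / INR K) ^ L.

Definition PiP (K L : nat) : R := (1 - sstar K L) * sel K L.

Definition PiR (K L : nat) : R := sstar K L * (INR K / INR L) * sel K L.

(* Main.v *)
Require Import Defs.
From Stdlib Require Import Reals Lra Lia.
From Coquelicot Require Import Coquelicot.
Open Scope R_scope.

Lemma lim_exp (u : nat -> R) (l : R) :
  is_lim_seq u l -> is_lim_seq (fun n => exp (u n)) (exp l).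
Proof. intros H. apply (filterlim_comp _ _ _ u exp eventually (locally l)). exact H. apply continuous_exp. Qed.

Lemma exp_pow_n x n : exp x ^ n = exp (INR n * x).
Proof.
  induction n as [|n IH]. simpl. rewrite Rmult_0_l, exp_0. reflexivity.
  rewrite S_INR. simpl pow. rewrite IH, <- exp_plus. f_equal. ring.
Qed.

Lemma key (k l : R) (m : nat) : 1 < k ->
  l * (k - 1) ^ (S m) / (k ^ (S m + 1) - (k - 1) ^ (S m - 1) * ((k - 1) * k + l))
  = (l / k) * (1 - 1 / k) ^ (S m) /
    (1 - (1 - 1 / k) ^ (S m) - (1 - 1 / k) ^ (S m) / (1 - 1 / k) * ((l / k) * (1 / k))).
Proof.
  intros Hk.
  replace (S m + 1)%nat with (S (S m)) by lia.
  replace (S m - 1)%nat with m by lia.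
  replace (k - 1) with (k * (1 - 1 / k)) by (field; lra).
  rewrite !Rpow_mult_distr. simpl pow.
  assert (HB : 0 < k ^ m) by (apply pow_lt; lra).
  assert (Hq : 0 < 1 - 1/k).
  { assert (1/k < 1). { apply (Rmult_lt_reg_r k); [lra|]. field_simplify; lra. } lra. }
  generalize dependent (k ^ m). intros B HB.
  generalize dependent (1 - 1/k). intros q Hq. generalize ((q)^m). intro P.
  set (D := k * (k * B) - B * P * (k * q * k + l)).
  replace (1 - q * P - q * P / q * (l / k * (1 / k))) with (D * / (k * k * B))
    by (unfold D; field; repeat split; lra).
  unfold Rdiv. rewrite Rinv_mult, Rinv_inv.
  generalize (/ D). intro iD. field. lra.
Qed.

Theorem mainTheorem5 (c : R) (K : nat -> nat) :
  0 < c ->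
  (forall L : nat, (0 < K L)%nat) ->
  is_lim_seq (fun L : nat => INR (K L) / INR L) c ->
  is_lim_seq (fun L : nat => sstar (K L) L) (1 / (c * (exp (1 / c) - 1))) /\
  is_lim_seq (fun L : nat => PiP (K L) L) (1 - (c + 1) / (c * exp (1 / c))) /\
  is_lim_seq (fun L : nat => PiR (K L) L) (exp (- (1 / c))).
Proof.
  intros Hc HK Hlim.
  assert (Ha : is_lim_seq (fun L => INR L / INR (K L)) (1 / c)).
  { apply is_lim_seq_ext with (fun L => / (INR (K L) / INR L)).
    { intro n. unfold Rdiv. rewrite Rinv_mult, Rinv_inv. ring. }
    assert (H := is_lim_seq_inv _ _ Hlim).
    replace (1 / c) with (/ c) by (field; lra).
    apply H. intro E; injection E; lra. }
  assert (Hinvl : is_lim_seq (fun L => / INR L) 0).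
  { assert (H := is_lim_seq_inv _ _ is_lim_seq_INR). apply H. discriminate. }
  assert (Hik : is_lim_seq (fun L => 1 / INR (K L)) 0).
  { apply is_lim_seq_ext_loc with (fun L => INR L / INR (K L) * / INR L).
    { exists 1%nat. intros n Hn. assert (0 < INR n) by (apply lt_0_INR; lia).
      assert (0 < INR (K n)) by (apply lt_0_INR; apply HK). field; lra. }
    assert (H := is_lim_seq_mult' _ _ _ _ Ha Hinvl). rewrite Rmult_0_r in H. exact H. }
  assert (Hev : eventually (fun n => (1 <= n)%nat /\ 2 < INR (K n))).
  { assert (h2 : 0 < 1/2) by lra.
    destruct (proj2 (is_lim_seq_spec _ _) Hik (mkposreal _ h2)) as [N HN].
    exists (max N 1). intros n Hn. split. lia.
    specialize (HN n ltac:(lia)). simpl in HN.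
    rewrite Rminus_0_r in HN. apply Rabs_def2 in HN. destruct HN as [HN _].
    assert (0 < INR (K n)) by (apply lt_0_INR; apply HK).
    assert (INR (K n) * (1 / INR (K n)) = 1) by (field; lra). nra. }
  assert (Hq : is_lim_seq (fun L => 1 - 1 / INR (K L)) 1).
  { assert (H := is_lim_seq_minus' _ _ _ _ (is_lim_seq_const 1) Hik).
    rewrite Rminus_0_r in H. exact H. }
  assert (Hp : is_lim_seq (fun L => (1 - 1 / INR (K L)) ^ L) (exp (- (1 / c)))).
  { apply is_lim_seq_le_le_loc with
      (fun L => exp (- ((INR L / INR (K L)) / (1 - 1 / INR (K L)))))
      (fun L => exp (- (INR L / INR (K L)))).
    - destruct Hev as [N HN]. exists N. intros n Hn. destruct (HN n Hn) as [_ Hk].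
      set (k := INR (K n)) in *.
      assert (Hx : 0 < 1 / k < 1/2).
      { split. apply Rdiv_lt_0_compat; lra.
        apply (Rmult_lt_reg_r k); [lra|]. field_simplify; lra. }
      split.
      + set (y := 1 / (k - 1)).
        replace (- (INR n / k / (1 - 1 / k))) with (INR n * - y) by (unfold y; field; lra).
        rewrite <- exp_pow_n. apply pow_incr. split. apply Rlt_le, exp_pos.
        rewrite exp_Ropp.
        assert (Hy := exp_ineq1_le y). assert (Hey := exp_pos y).
        assert (E1 : (1 - 1/k) * (1 + y) = 1) by (unfold y; field; lra).
        assert (E2 : (1 - 1/k) * (1 + y) <= (1 - 1/k) * exp y) by (apply Rmult_le_compat_l; lra).
        apply (Rmult_le_reg_r (exp y)); [lra|]. rewrite Rinv_l; lra.
      + replace (- (INR n / k)) with (INR n * - (1/k)) by (field; lra).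
        rewrite <- exp_pow_n. apply pow_incr. split. lra.
        assert (H := exp_ineq1_le (- (1/k))). lra.
    - apply lim_exp.
      assert (H := proj1 (is_lim_seq_opp _ _) (is_lim_seq_div' _ _ _ _ Ha Hq ltac:(lra))).
      simpl in H. replace (- (1/c)) with (- (1/c/1)) by (field; lra). exact H.
    - apply lim_exp. assert (H := proj1 (is_lim_seq_opp _ _) Ha). exact H. }
  set (e := exp (- (1/c))) in *.
  set (E := exp (1/c)).
  assert (HE : 1 < E).
  { unfold E. assert (H0 : exp 0 < exp (1/c)) by (apply exp_increasing; apply Rdiv_lt_0_compat; lra). rewrite exp_0 in H0. exact H0. }
  assert (He : e = / E) by (unfold e, E; apply exp_Ropp).
  assert (Hb : is_lim_seq (fun L => INR L / INR (K L) * (1 / INR (K L))) 0).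
  { assert (H := is_lim_seq_mult' _ _ _ _ Ha Hik). rewrite Rmult_0_r in H. exact H. }
  set (S0 := (1/c * e) / (1 - e - e / 1 * 0)).
  assert (Hs : is_lim_seq (fun L => sstar (K L) L) S0).
  { apply is_lim_seq_ext_loc with
      (fun L => (INR L / INR (K L)) * (1 - 1 / INR (K L)) ^ L /
        (1 - (1 - 1 / INR (K L)) ^ L - (1 - 1 / INR (K L)) ^ L / (1 - 1 / INR (K L))
             * ((INR L / INR (K L)) * (1 / INR (K L))))).
    { destruct Hev as [N HN]. exists N. intros n Hn. destruct (HN n Hn) as [H1 Hk].
      destruct n as [|m]. lia. unfold sstar. rewrite key; [reflexivity|lra]. }
    apply is_lim_seq_div'.
    - apply is_lim_seq_mult'; assumption.
    - apply is_lim_seq_minus'. apply is_lim_seq_minus'. apply is_lim_seq_const. assumption.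
      apply is_lim_seq_mult'. apply is_lim_seq_div'; [exact Hp | exact Hq | lra]. exact Hb.
    - rewrite He. assert (0 < / E < 1).
      { split. apply Rinv_0_lt_compat; lra. rewrite <- Rinv_1. apply Rinv_lt_contravar; lra. }
      lra. }
  assert (HS0 : S0 = 1 / (c * (E - 1))).
  { unfold S0. rewrite He. field. repeat split; lra. }
  split; [|split].
  - rewrite <- HS0. exact Hs.
  - replace (1 - (c + 1) / (c * E)) with ((1 - S0) * (1 - e)).
    + unfold PiP, sel. apply is_lim_seq_mult'; apply is_lim_seq_minus'; auto; apply is_lim_seq_const.
    + rewrite HS0, He. field. repeat split; lra.
  - replace e with (S0 * c * (1 - e)).
    + unfold PiR, sel. apply is_lim_seq_mult'. apply is_lim_seq_mult'; auto.
      apply is_lim_seq_minus'; auto; apply is_lim_seq_const.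
    + rewrite HS0, He. field. repeat split; lra.
Qed.
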